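(* Let $3\le q<\infty$ and let $G=(V,E,F)$ be a $q$-face regular plane tessellation with non-positive vertex curvature, $v_0\in V$, and let $\kappa_k$, $N$, $b_l$ be as in the context. Then for $0\le l\le N-1$ and $k\ge1$: $b_l-\kappa_k\ge2$ if $l=\frac{N-1}2\,(=0)$ and $q\in\{3,4\}$; $b_l-\kappa_k\ge1$ if $l\ne\frac{N-1}2$ or $q$ is even; $b_l-\kappa_k\ge0$ if $l=\frac{N-1}2\,(=1)$ and $q=5$; $b_l-\kappa_k\ge-1$ if $l=\frac{N-1}2$ and $q\ge7$ is odd.
   Context: A $q$-face regular plane tessellation is a locally tessellating planar graph (simple planar graph — no loops, multiple edges or degree-one vertices, finite degrees, locally finitely many faces — in which every edge lies in exactly two faces, two faces are disjoint or share exactly a vertex or an edge path, and every face is a closed topological disc, complement of an open disc, or closed half plane with boundary a path) in which every face has degree $q$. Vertex curvature: $\kappa(v)=1-\frac{|v|}2+\sum_{f\ni v}\frac1{|f|}$. With $d$ the combinatorial distance, $S_k=\{v:d(v_0,v)=k\}$, $\sigma_k=|S_k|$ and $\kappa_k=\frac{2q}{q-2}\cdot\frac1{\sigma_k}\sum_{v\in S_k}\kappa(v)$. $N=\frac{q-2}2$ if $q$ is even and $N=q-2$ if $q$ is odd. For $0\le l\le N-1$, $b_l=\frac4{q-2}$ except $b_l=\frac4{q-2}-2$ when $q$ is odd and $l=\frac{N-1}2$. *)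

(* Defs.v *)
From mathcomp Require Import all_boot all_order all_algebra.
Set Implicit Arguments. Unset Strict Implicit. Unset Printing Implicit Defensive.
Import Order.TTheory GRing.Theory Num.Theory.

(* A (combinatorial) q-face regular tessellation is given by
   - a vertex type [V]; [nbrs v] = the (finite, duplicate-free) list of neighbours of v;
   - a face type [F]; [bnd f : 'I_q -> V] = the boundary cycle of the face f
     (bnd f i adjacent to bnd f (ordS i));
   - [vfaces v] = the (finite, duplicate-free) list of faces containing v. *)

Section Tess.
Variables (V F : eqType) (q : nat) (nbrs : V -> seq V) (bnd : F -> 'I_q -> V)
          (vfaces : V -> seq F).

Definition adj (x y : V) : bool := y \in nbrs x.

Definition vdeg (v : V) : nat := size (nbrs v).

Definition onface (f : F) (v : V) : bool := [exists i, bnd f i == v].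

Definition edge_in (f : F) (x y : V) : bool :=
  [exists i, ((bnd f i == x) && (bnd f (ordS i) == y))
          || ((bnd f i == y) && (bnd f (ordS i) == x))].

Definition succn (i : 'I_q) (j : nat) : 'I_q := iter j (@ordS q) i.

Definition is_dist (x y : V) (k : nat) : Prop :=
  (exists p : seq V, path adj x p /\ last x p = y /\ size p = k) /\
  (forall p : seq V, path adj x p -> last x p = y -> k <= size p).

Definition q_face_regular_tessellation : Prop :=
  (forall x, uniq (nbrs x)) /\
  (forall x, x \notin nbrs x) /\
  (forall x y, adj x y = adj y x) /\
  (forall x, 1 < vdeg x) /\
  (forall x y, exists p : seq V, path adj x p /\ last x p = y) /\
  (forall f, injective (bnd f)) /\
  (forall f i, adj (bnd f i) (bnd f (ordS i))) /\
  (forall f g, (forall v, onface f v = onface g v) -> f = g) /\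
  (* locally finitely many faces: vfaces v lists the faces containing v *)
  (forall v, uniq (vfaces v)) /\
  (forall v f, (f \in vfaces v) = onface f v) /\
  (forall x y, adj x y -> exists f g, f != g /\ edge_in f x y /\ edge_in g x y /\
      forall h, edge_in h x y -> h = f \/ h = g) /\
  (* two faces are disjoint or share exactly a vertex or an edge path *)
  (forall f g, f != g ->
     (forall v, ~~ (onface f v && onface g v)) \/
     exists (i : 'I_q) (m : nat), m < q /\
       (forall v, (onface f v && onface g v) <->
                  exists j, j <= m /\ v = bnd f (succn i j)) /\
       (forall j, j < m -> edge_in g (bnd f (succn i j)) (bnd f (succn i j.+1))) /\
       (forall x y, edge_in f x y -> edge_in g x y ->
          exists j, j < m /\ ((x = bnd f (succn i j) /\ y = bnd f (succn i j.+1)) \/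
                              (y = bnd f (succn i j) /\ x = bnd f (succn i j.+1))))).


Local Open Scope ring_scope.

Definition vcurv (v : V) : rat :=
  1 - (vdeg v)%:R / 2 + \sum_(f <- vfaces v) (q%:R)^-1.

(* kappa_k, computed from a duplicate-free enumeration [s] of the sphere S_k *)
Definition kappa_sphere (s : seq V) : rat :=
  (2 * q%:R / (q%:R - 2)) * ((size s)%:R)^-1 * \sum_(v <- s) vcurv v.

End Tess.
Arguments q_face_regular_tessellation [V F] q nbrs bnd vfaces.

Definition Nq (q : nat) : nat := if odd q then (q - 2)%N else ((q - 2) %/ 2)%N.

(* b_l; the condition l = (N-1)/2 is written 2l+1 = N *)
Definition bl (q l : nat) : rat :=
  if odd q && (l.*2.+1 == Nq q) then (4 / (q%:R - 2) - 2)%R else (4 / (q%:R - 2))%R.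

(* Main.v *)
Require Import Defs.
From mathcomp Require Import all_boot all_order all_algebra.
Import Order.TTheory GRing.Theory Num.Theory.
From mathcomp Require Import lra ring zify.
From Stdlib Require Import Classical.

Lemma count_sum (T : Type) (a : pred T) (s : seq T) :
  count a s = \sum_(x <- s) (a x : nat).
Proof. by rewrite -sum1_count big_mkcond. Qed.

Lemma count2 (T : eqType) (a : pred T) (s : seq T) (x y : T) :
  uniq s -> x != y -> (forall z, (z \in s) && a z = (z == x) || (z == y)) ->
  count a s = 2.
Proof.
move=> us xy H.
rewrite -size_filter.
have -> : 2 = size [:: x; y] by [].
apply: perm_size; apply: uniq_perm.
- exact: filter_uniq.
- by rewrite /= inE xy.
move=> z; rewrite mem_filter andbC H !inE //.
Qed.

Lemma ordSSneq (q : nat) (j : 'I_q) : (3 <= q)%N -> ordS (ordS j) != j.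
Proof.
move=> q3; apply/eqP=> /(congr1 val) /=.
rewrite -addn1 modnDml -addn1 -addnA /= => /eqP.
rewrite -{2}(modn_small (ltn_ord j)) -{2}(addn0 j) eqn_modDl modn_small //.
by rewrite mod0n.
Qed.

Lemma deg_faces (V F : eqType) (q : nat) (nbrs : V -> seq V) (bnd : F -> 'I_q -> V)
    (vfaces : V -> seq F) :
  (3 <= q)%N ->
  q_face_regular_tessellation q nbrs bnd vfaces ->
  forall v, vdeg nbrs v = size (vfaces v).
Proof.
move=> q3 [un [_ [sym [_ [_ [binj [badj [_ [uf [memf [edg _]]]]]]]]]]] v.
set Ns := nbrs v; set Fs := vfaces v.
pose E g w := edge_in bnd g v w.
have HF : forall g, g \in Fs -> count (E g) Ns = 2.
  move=> g; rewrite memf => /existsP [i /eqP bi].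
  pose j := ord_pred i.
  have ji : ordS j = i by rewrite /j ord_predK.
  apply: (@count2 _ _ _ (bnd g (ordS i)) (bnd g j)); first exact: un.
    apply/eqP=> /binj /eqP; rewrite -ji; exact: (negP (@ordSSneq q j q3)).
  move=> w; apply/idP/idP.
    case/andP=> _ /existsP [j' /orP [/andP [/eqP h1 /eqP h2] | /andP [/eqP h1 /eqP h2]]].
      by rewrite -bi in h1; move/binj: h1 => e; rewrite -h2 e eqxx.
    rewrite -bi -ji in h2; move/binj/ordS_inj: h2 => e.
    by rewrite -h1 e eqxx orbT.
  case/orP=> /eqP ->; apply/andP; split.
  - by rewrite /Ns -bi; apply: badj.
  - by apply/existsP; exists i; rewrite bi !eqxx.
  - by rewrite /Ns -bi -ji /= -[_ \in _]/(adj nbrs _ _) sym; apply: badj.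
  - by apply/existsP; exists j; rewrite ji bi !eqxx orbT.
have HN : forall w, w \in Ns -> count (fun g => E g w) Fs = 2.
  move=> w wN; have [f1 [f2 [n12 [e1 [e2 eh]]]]] := edg v w wN.
  apply: (@count2 _ _ _ f1 f2); first exact: uf.
    exact: n12.
  move=> g; apply/idP/idP.
    case/andP=> _ /eh [] ->; by rewrite eqxx ?orbT.
  have onf : forall h, E h w -> h \in Fs.
    move=> h /existsP [j /orP [/andP [/eqP h1 _] | /andP [_ /eqP h2]]];
      rewrite memf; apply/existsP; [exists j | exists (ordS j)]; apply/eqP => //.
  by case/orP=> /eqP ->; apply/andP; split => //; apply: onf.
have : \sum_(g <- Fs) count (E g) Ns = \sum_(w <- Ns) count (fun g => E g w) Fs.
  under eq_bigr => g _ do rewrite count_sum.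
  rewrite exchange_big /=.
  by apply: eq_bigr => x _; rewrite count_sum.
rewrite big_seq [in RHS]big_seq.
rewrite (eq_bigr (fun _ => 2)); last by move=> g /HF.
rewrite [in RHS](eq_bigr (fun _ => 2)); last by move=> w /HN.
rewrite -!big_seq !big_const_seq !count_predT !iter_addn_0 /vdeg.
by move/eqP; rewrite eqn_mul2l /= => /eqP.
Qed.

Local Open Scope ring_scope.

Lemma sum_const_seq (T : Type) (s : seq T) (c : rat) :
  \sum_(x <- s) c = (size s)%:R * c.
Proof.
elim: s => [|a s IH]; first by rewrite big_nil mul0r.
by rewrite big_cons IH /= -addn1 natrD mulrDl mul1r addrC.
Qed.

Lemma curv_bounds (q d : nat) :
  (3 <= q)%N ->
  1 - d%:R / 2 + d%:R * (q%:R)^-1 <= 0 :> rat ->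
  1 - d%:R / 2 + d%:R * (q%:R)^-1 <= 3 * (q%:R)^-1 - 1/2 :> rat /\
  (q = 5%N -> 1 - d%:R / 2 + d%:R * (q%:R)^-1 <= - 1/5 :> rat).
Proof.
move=> q3.
set Q : rat := q%:R; set D : rat := d%:R; set x := Q^-1. move=> H.
have Q3 : 3 <= Q by rewrite /Q (ler_nat rat 3 q).
have Q0 : Q != 0 by apply/eqP => h; rewrite h in Q3; lra.
have xQ : x * Q = 1 by rewrite /x mulVf.
have x0 : 0 < x by rewrite /x invr_gt0; lra.
have x3 : x <= 1/3 by nra.
have D0 : 0 <= D by rewrite /D ler0n.
have Dx : 0 <= D * x by apply: mulr_ge0 => //; lra.
have D2 : 2 <= D by lra.
have D2' : 0 < D * x by apply: mulr_gt0; lra.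
have D3 : 2 < D by lra.
have d3 : (2 < d)%N by rewrite -(ltr_nat rat).
have D3' : 3 <= D by rewrite /D (ler_nat rat 3 d).
split; first by nra.
move=> q5; have x5 : x = 1/5 by rewrite /x /Q q5.
rewrite x5 in H *.
have D4 : 3 < D by lra.
have D4' : 4 <= D by rewrite /D (ler_nat rat 4 d); rewrite /D (ltr_nat rat 3 d) in D4.
lra.
Qed.


Lemma ex_min (P : nat -> Prop) : (exists n, P n) -> exists n, P n /\ forall m, P m -> (n <= m)%N.
Proof.
move=> [n Pn]; apply: NNPP => H.
suff : forall n m, (m <= n)%N -> ~ P m by move/(_ n n (leqnn n)).
elim=> [|n0 IH] m hm Pm; apply: H; exists m; split => // m' Pm';
  rewrite leqNgt; apply/negP => lt.
- by move: hm lt; rewrite leqn0 => /eqP ->.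
- by apply: (IH m') Pm'; rewrite -ltnS; apply: leq_trans hm.
Qed.

Section Ball.
Variables (V : eqType) (nbrs : V -> seq V) (v0 : V).
Fixpoint ball (j : nat) : seq V :=
  if j is j'.+1 then ball j' ++ flatten (map nbrs (ball j')) else [:: v0].

Lemma ball_mono j m : {subset ball j <= ball (j + m)}.
Proof.
elim: m => [|m IH]; first by rewrite addn0.
by move=> x /IH xb; rewrite addnS /= mem_cat xb.
Qed.

Lemma ballP p : path (adj nbrs) v0 p -> last v0 p \in ball (size p).
Proof.
elim/last_ind: p => [|p x IH]; first by rewrite /= mem_head.
rewrite rcons_path last_rcons size_rcons => /andP [pp ax] /=.
rewrite mem_cat; apply/orP; right; apply/flatten_mapP.
by exists (last v0 p); [apply: IH|].
Qed.

Lemma sphere_nonempty k :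
  (1 <= k)%N ->
  (forall x y, exists p : seq V, path (adj nbrs) x p /\ last x p = y) ->
  ~ (exists s : seq V, forall v, v \in s) ->
  exists x, is_dist nbrs v0 x k.
Proof.
move=> k1 conn inf.
have [y yb] : exists y, y \notin ball k.-1.
  apply: NNPP => H; apply: inf; exists (ball k.-1) => v.
  by apply: NNPP => nv; apply: H; exists v; apply/negP.
have [n [[p [pp [py ps]]] pmin]] :
    exists n, (exists p, path (adj nbrs) v0 p /\ last v0 p = y /\ size p = n) /\
      forall m, (exists p, path (adj nbrs) v0 p /\ last v0 p = y /\ size p = m) -> (n <= m)%N.
  apply: ex_min; have [p [pp py]] := conn v0 y; by exists (size p), p.
have kp : (k <= size p)%N.
  rewrite leqNgt; apply/negP => lt; move/negP: yb; apply.
  rewrite -py; have := @ballP p pp; move/(@ball_mono _ (k.-1 - size p)).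
  by rewrite subnKC // -ltnS prednK.
have pcat := cat_take_drop k p.
move: (pp); rewrite -pcat cat_path => /andP [p1 p2].
exists (last v0 (take k p)); split.
  by exists (take k p); split => //; split => //; rewrite size_takel.
move=> p' pp' lp'; rewrite leqNgt; apply/negP => lt.
have : (n <= size (p' ++ drop k p))%N.
  apply: pmin; exists (p' ++ drop k p); split; first by rewrite cat_path pp' lp'.
  by split => //; rewrite last_cat lp' -last_cat pcat.
rewrite size_cat size_drop -ps leqNgt; move/negP; apply.
lia.
Qed.
End Ball.

Lemma avg_le (V : eqType) (f : V -> rat) (s : seq V) (B : rat) :
  s != [::] -> (forall v, f v <= B) ->
  ((size s)%:R)^-1 * \sum_(v <- s) f v <= B.
Proof.
move=> sn H.
have S : \sum_(v <- s) f v <= (size s)%:R * B.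
  elim: s {sn} => [|a s IH]; first by rewrite big_nil mul0r.
  by rewrite big_cons /= -addn1 natrD mulrDl mul1r addrC lerD.
have n0 : 0 < (size s)%:R :> rat by rewrite ltr0n lt0n size_eq0.
rewrite -(mulKf (lt0r_neq0 n0) B); apply: ler_wpM2l => //.
by rewrite invr_ge0 ltW.
Qed.

Theorem lemma5 (V F : eqType) (q : nat) (nbrs : V -> seq V) (bnd : F -> 'I_q -> V)
    (vfaces : V -> seq F) (v0 : V) :
  (3 <= q)%N ->
  q_face_regular_tessellation q nbrs bnd vfaces ->
  ~ (exists s : seq V, forall v, v \in s) ->
  (forall v, (vcurv q nbrs vfaces v <= 0)%R) ->
  forall (l k : nat), (l < Nq q)%N -> (1 <= k)%N ->
  forall s : seq V, uniq s -> (forall v, v \in s <-> is_dist nbrs v0 v k) ->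
  let d := (bl q l - kappa_sphere q nbrs vfaces s)%R in
  ((l.*2.+1 == Nq q) && ((q == 3) || (q == 4)) -> (2 <= d)%R) /\
  ((l.*2.+1 != Nq q) || ~~ odd q -> (1 <= d)%R) /\
  ((l.*2.+1 == Nq q) && (q == 5) -> (0 <= d)%R) /\
  ((l.*2.+1 == Nq q) && (7 <= q)%N && odd q -> (-1 <= d)%R).
Proof.
move=> q3 T inf curv l k lN k1 s us sP d.
have vc : forall v, vcurv q nbrs vfaces v =
    1 - (vdeg nbrs v)%:R / 2 + (vdeg nbrs v)%:R * (q%:R)^-1.
  by move=> v; rewrite /vcurv sum_const_seq (@deg_faces V F q nbrs bnd vfaces q3 T).
have CB : forall v, _ := fun v => @curv_bounds q (vdeg nbrs v) q3 (eq_ind _ (fun z => z <= 0) (curv v) _ (vc v)).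
have sn : s != [::].
  have [_ [_ [_ [_ [conn _]]]]] := T.
  have [x xd] := @sphere_nonempty V nbrs v0 k k1 conn inf.
  by apply/eqP => s0; move/sP: xd; rewrite s0.
set Q : rat := q%:R.
have Q3 : 3 <= Q by rewrite /Q (ler_nat rat 3 q).
have c0 : 0 <= 2 * Q / (Q - 2).
  by apply: divr_ge0; lra.
have KB : forall B, (forall v, vcurv q nbrs vfaces v <= B) ->
    kappa_sphere q nbrs vfaces s <= 2 * Q / (Q - 2) * B.
  move=> B HB; rewrite /kappa_sphere -mulrA; apply: ler_wpM2l => //.
  exact: avg_le.
have K0 := KB 0 curv; rewrite mulr0 in K0.
have K1 : kappa_sphere q nbrs vfaces s <= 4 / (Q - 2) - 1.
  have -> : 4 / (Q - 2) - 1 = 2 * Q / (Q - 2) * (3 * Q^-1 - 1/2).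
    by field; lra.
  by apply: KB => v; rewrite vc; case: (CB v).
split; [|split; [|split]].
- case/andP=> e /orP [] /eqP q34;
    rewrite /d; (have -> : bl q l = 2 by rewrite /bl e q34); lra.
- move=> h; rewrite /d; have -> : bl q l = 4 / (Q - 2).
    by rewrite /bl; case: (odd q) h => //=; rewrite orbF => /negbTE ->.
  lra.
- case/andP=> e /eqP q5.
  have K5 : kappa_sphere q nbrs vfaces s <= - 2/3.
    have -> : - 2/3 = 2 * Q / (Q - 2) * (-1/5) :> rat by rewrite /Q q5.
    by apply: KB => v; rewrite vc; case: (CB v) => _; apply.
  rewrite /d; have -> : bl q l = - 2/3 by rewrite /bl e q5.
  lra.
- case/andP=> /andP [e _] o.
  rewrite /d /bl e o /= -/Q; lra.
Qed.
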